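(* Let $G,\sigma\ge0$ with $G+\sigma>0$, $\lambda>0$, $C_{\mathbf{x}}\ge0$, and $\varepsilon>0$ with $\varepsilon\le\frac72(G+\sigma)$. Set $\beta_\star=1-\left(\frac{\varepsilon}{7(G+\sigma)}\right)^2$, $D_\star=\frac14\lambda^{-1/2}\varepsilon^{1/2}\left(1+\frac{49(G+\sigma)^2}{\varepsilon^2}\sqrt{C_{\mathbf{x}}}\right)^{-1}$, $\mu_\star=2\lambda^{1/2}\varepsilon^{1/2}\left(1+\frac{49(G+\sigma)^2}{\varepsilon^2}\sqrt{C_{\mathbf{x}}}\right)$, $\eta_\star=\frac{2}{G+\sigma}D_\star\sqrt{1-\beta_\star}$ and $\zeta_\star=\frac{\beta_\star}{1+\eta_\star\mu_\star}$. Then $1-\zeta_\star=\Theta\!\left(\frac{\varepsilon^2}{(G+\sigma)^2}\right)$ (with absolute constants). Consequently, every $\kappa\in[\zeta_\star,1]$ satisfies $1-\Theta\!\left(\frac{\varepsilon^2}{(G+\sigma)^2}\right)\le\kappa\le1$, and the step size $\gamma=\frac{\eta_\star}{1-\zeta_\star}$ equals $\Theta\!\left(\frac{(G+\sigma)^2}{\varepsilon^2}\right)\cdot\eta_\star$.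
   Context: In the paper these are the parameters of the conversion scheme equivalent to schedule-free SGD, where $C_{\mathbf{x}}$ is the iterate stability factor of the run, $\kappa_t$ is drawn uniformly from $[\zeta_\star,1]$ and $\gamma$ is the step size of the base SGD trajectory. *)

(* Defs.v *)
From mathcomp Require Import all_boot all_order all_algebra.
Set Implicit Arguments. Unset Strict Implicit. Unset Printing Implicit Defensive.
Import Order.TTheory GRing.Theory Num.Theory.
Local Open Scope ring_scope.

Section Params.
Variable R : rcfType.
Variables (G sigma lam Cx eps : R).

Definition beta_star : R := 1 - (eps / (7 * (G + sigma))) ^+ 2.

Definition stab_factor : R := 1 + 49 * (G + sigma) ^+ 2 / eps ^+ 2 * Num.sqrt Cx.

Definition D_star : R := 4^-1 * (Num.sqrt lam)^-1 * Num.sqrt eps * stab_factor^-1.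

Definition mu_star : R := 2 * Num.sqrt lam * Num.sqrt eps * stab_factor.

Definition eta_star : R := 2 / (G + sigma) * D_star * Num.sqrt (1 - beta_star).

Definition zeta_star : R := beta_star / (1 + eta_star * mu_star).

Definition gamma_star : R := eta_star / (1 - zeta_star).
End Params.

(* Main.v *)
Require Import Defs.
From mathcomp Require Import all_boot all_order all_algebra.
From mathcomp Require Import ring lra.
Import Order.TTheory GRing.Theory Num.Theory.
Local Open Scope ring_scope.

Lemma key (R : rcfType) (G sigma lam Cx eps : R) :
    0 < G + sigma -> 0 < lam -> 0 <= Cx -> 0 < eps ->
    let t := eps / (7 * (G + sigma)) in
    zeta_star G sigma lam Cx eps = (1 - t ^+ 2) / (1 + 7 * t ^+ 2).
Proof.
move=> hS hl hC he t.
have ht : 0 <= t by rewrite /t divr_ge0 // ?ltW // mulr_gt0.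
have hsq : Num.sqrt (1 - beta_star G sigma eps) = t.
  by rewrite /beta_star opprB addrC subrK sqrtr_sqr ger0_norm.
have hF : 0 < stab_factor G sigma Cx eps.
  rewrite /stab_factor; apply: (@lt_le_trans _ _ 1) => //.
  rewrite lerDl; apply: mulr_ge0; last exact: sqrtr_ge0.
  apply: mulr_ge0; last by rewrite invr_ge0 exprn_ge0 // ltW.
  by apply: mulr_ge0 => //; rewrite exprn_ge0 // ltW.
have ha : 0 < Num.sqrt lam by rewrite sqrtr_gt0.
have hb : Num.sqrt eps * Num.sqrt eps = eps by rewrite -expr2 sqr_sqrtr ?ltW.
have hem : eta_star G sigma lam Cx eps * mu_star G sigma lam Cx eps = 7 * t ^+ 2.
  rewrite /eta_star hsq /D_star /mu_star.
  set a := Num.sqrt lam; set b := Num.sqrt eps; set F := stab_factor _ _ _ _.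
  have -> : 2 / (G + sigma) * (4^-1 * a^-1 * b * F^-1) * t * (2 * a * b * F)
     = (b * b) * t / (G + sigma).
    field; rewrite ?gt_eqF //.
  rewrite hb /t; field; rewrite ?gt_eqF //.
rewrite /zeta_star hem /beta_star.
done.
Qed.

Theorem proposition3 :
  exists c1 c2 c3 c4 c5 : nat,
    (0 < c1)%N /\ (0 < c2)%N /\ (0 < c3)%N /\ (0 < c4)%N /\ (0 < c5)%N /\
  forall (R : rcfType) (G sigma lam Cx eps : R),
    0 <= G -> 0 <= sigma -> 0 < G + sigma -> 0 < lam -> 0 <= Cx ->
    0 < eps -> eps <= 7 / 2 * (G + sigma) ->
    let r := eps ^+ 2 / (G + sigma) ^+ 2 in
    let zeta := zeta_star G sigma lam Cx eps in
    let eta := eta_star G sigma lam Cx eps in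
    let gamma := gamma_star G sigma lam Cx eps in
    (* 1 - zeta_* = Theta(eps^2/(G+sigma)^2) *)
    (c1%:R^-1 * r <= 1 - zeta /\ 1 - zeta <= c2%:R * r) /\
    (* every kappa in [zeta_*, 1] satisfies 1 - Theta(r) <= kappa <= 1 *)
    (forall kappa : R, zeta <= kappa <= 1 ->
        1 - c5%:R * r <= kappa /\ kappa <= 1) /\
    (* gamma = Theta((G+sigma)^2/eps^2) * eta_* *)
    (exists theta : R, gamma = theta * eta /\
        c3%:R^-1 * r^-1 <= theta /\ theta <= c4%:R * r^-1).
Proof.
exists 17%N, 1%N, 1%N, 17%N, 1%N; do 5 split => //.
move=> R G sigma lam Cx eps hG hs hS hl hC he hle r zeta eta gamma.
set t := eps / (7 * (G + sigma)).
have hz : zeta = (1 - t ^+ 2) / (1 + 7 * t ^+ 2) := @key R G sigma lam Cx eps hS hl hC he.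
have ht : 0 < t by rewrite /t divr_gt0 // mulr_gt0.
have ht2 : t <= 2^-1.
  by rewrite /t ler_pdivrMr ?mulr_gt0 //; lra.
set u := t ^+ 2.
have hu : 0 < u by rewrite /u exprn_gt0.
have hu4 : u <= 4^-1 by rewrite /u; nra.
have hr : r = 49 * u.
  rewrite /r /u /t; field; rewrite ?gt_eqF //.
clearbody r.
have h1z : 1 - zeta = 8 * u / (1 + 7 * u).
  rewrite hz -/u. field. rewrite gt_eqF //; lra.
have hd : 0 < 1 + 7 * u by lra.
split; [split|split].
- rewrite h1z. rewrite hr ler_pdivlMr //; nra.
- rewrite h1z hr ler_pdivrMr //; nra.
- move=> k /andP[h1 h2]; split => //.
  have : 1 - zeta <= r by rewrite h1z hr ler_pdivrMr //; nra.
  lra.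
- exists (1 - zeta)^-1; split.
    by rewrite /gamma /gamma_star mulrC.
  have hv : 4 <= u^-1.
    by rewrite -[4]invrK lef_pV2 ?posrE ?invr_gt0 //.
  have e1 : (1%:R)^-1 * (49 * u)^-1 = u^-1 / 49 by field; rewrite gt_eqF.
  have e2 : (8 * u / (1 + 7 * u))^-1 = (u^-1 + 7) / 8.
    by field; rewrite ?gt_eqF //; lra.
  have e3 : 17%:R * (49 * u)^-1 = 17 * u^-1 / 49 by field; rewrite gt_eqF.
  rewrite h1z hr e1 e2 e3; split; lra.
Qed.
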